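(* Let $\ell,t,k,d,m$ be positive integers and let $\mathbb{F}$ be a finite field. Suppose that for some integer $b>\ell/k$ there is an $\mathbb{F}$-linear code $C\subseteq(\mathbb{F}^b)^k$ with rate at least $\ell/(kb)$ and distance at least $dt+1$. Then there is a $t$-private $k$-server linear HSS for $\mathsf{POLY}_{d,m}(\mathbb{F})^\ell$ (with $\mathsf{Share}$ being $t$-private CNF sharing) with download rate $\ell/(kb)$ and upload cost $k\ell m\binom{k-1}{t}\log_2|\mathbb{F}|$.
   Context: $\mathsf{POLY}_{d,m}(\mathbb{F})$ is the class of all polynomials in $\mathbb{F}[X_1,\dots,X_m]$ of total degree at most $d$, viewed as functions $\mathbb{F}^m\to\mathbb{F}$. For a class $\mathcal{F}$ of functions $\mathcal{X}^m\to\mathcal{Y}$, $\mathcal{F}^\ell$ is the class of functions $\mathcal{X}^{\ell m}\to\mathcal{Y}^\ell$ mapping $(x_{i,r})_{i\in[m],r\in[\ell]}$ to $(f_1(\mathbf{x}_1),\dots,f_\ell(\mathbf{x}_\ell))$, $\mathbf{x}_r=(x_{1,r},\dots,x_{m,r})$, $f_r\in\mathcal{F}$, with all $\ell m$ inputs shared independently. A $k$-server HSS $(\mathsf{Share},\mathsf{Eval},\mathsf{Rec})$: randomized $\mathsf{Share}$ maps each input to $k$ input shares; server $j$ computes output share $y^{(j)}=\mathsf{Eval}(f,j,\cdot)$ from its input shares; $\mathsf{Rec}(y^{(1)},\dots,y^{(k)})$ equals the function value with probability 1. $t$-private: any $\le t$ servers' input shares have a distribution independent of the input. $|w|=\log_2$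 of the size of $w$'s domain; upload cost $\sum_{i,j}|x_i^{(j)}|$; download cost $\sum_j|y^{(j)}|$; download rate $\log_2|\mathcal{Y}|/$download cost. Linear HSS: $\mathcal{X}=\mathbb{F}$, $\mathsf{Share}(x,\mathbf{r})$ $\mathbb{F}$-linear in $x$ and uniform random $\mathbf{r}$, output shares in $\mathbb{F}^{b_j}$, $\mathsf{Rec}$ $\mathbb{F}$-linear. $t$-private $k$-party CNF sharing of $x$: uniformly random $x_T$ for $T\subseteq[k]$, $|T|=t$, with $\sum_T x_T=x$; party $j$ gets $(x_T)_{j\notin T}$. $\mathbb{F}$-linear code $C\subseteq(\mathbb{F}^b)^k$: $\mathbb{F}$-subspace; rate $\dim_{\mathbb{F}}C/(bk)$; distance = minimum over distinct codewords of the number of coordinates $i\in[k]$ where they differ. *)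

(* Defs.v *)
From HB Require Import structures.
From mathcomp Require Import all_boot all_order all_algebra.
From mathcomp Require Import mpoly.
From Stdlib Require Rdefinitions Rpower.
From mathcomp Require Import Rstruct.
Set Implicit Arguments. Unset Strict Implicit. Unset Printing Implicit Defensive.
Import Order.TTheory GRing.Theory Num.Theory.
Local Open Scope ring_scope.

(* |w| = log_2 of the size of the domain of w. *)
Definition log2 (N : nat) : Rdefinitions.R := Rpower.ln (N%:R) / Rpower.ln 2%:R.

(* An F-linear code C ⊆ (F^b)^k is a subspace of k×b matrices over F:
   row i of a codeword is its i-th coordinate (a symbol in F^b). *)
Definition code_rate (F : fieldType) (k b : nat) (C : {vspace 'M[F]_(k, b)}) : rat :=
  (\dim C)%:R / (b * k)%:R.

Definition code_dist_ge (F : fieldType) (k b : nat) (C : {vspace 'M[F]_(k, b)})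
    (D : nat) : Prop :=
  forall c c' : 'M[F]_(k, b), c \in C -> c' \in C -> c != c' ->
    (D <= #|[set i : 'I_k | row i c != row i c']|)%N.

(* polynomials in F[X_1..X_m] of total degree at most d
   (msize p = 1 + total degree, 0 for p = 0). *)
Definition inPOLY (F : ringType) (d m : nat) (p : {mpoly F[m]}) : bool :=
  (msize p <= d.+1)%N.

Definition tsets (k t : nat) := {T : {set 'I_k} | #|T| == t}.

(* a CNF sharing (x_T)_{|T|=t} of one input; it shares x iff sum_T x_T = x.
   Choosing such a vector uniformly at random among those with sum x is
   t-private k-party CNF sharing of x. *)
Definition cnf_vec (F : finFieldType) (k t : nat) := {ffun tsets k t -> F}.

Definition cnf_valid (F : finFieldType) (k t : nat) (x : F) (rho : cnf_vec F k t) :=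
  \sum_(T : tsets k t) rho T == x.

(* party j's CNF share (x_T)_{j ∉ T}, encoded as the vector in which the
   entries x_T with j ∈ T (not given to party j) are zeroed out. *)
Definition cnf_share (F : finFieldType) (k t : nat) (j : 'I_k) (rho : cnf_vec F k t)
  : cnf_vec F k t :=
  [ffun T : tsets k t => if j \notin val T then rho T else 0].

Definition cnf_share_len (k t : nat) (j : 'I_k) : nat :=
  #|[pred T : tsets k t | j \notin val T]|.

Definition joint_cnf (F : finFieldType) (k t l m : nat) :=
  {ffun 'I_l * 'I_m -> cnf_vec F k t}.

Definition joint_valid (F : finFieldType) (k t l m : nat)
    (x : 'I_l -> 'I_m -> F) (rho : joint_cnf F k t l m) : bool :=
  [forall ri : 'I_l * 'I_m, cnf_valid (x ri.1 ri.2) (rho ri)].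

Definition joint_share (F : finFieldType) (k t l m : nat) (j : 'I_k)
    (rho : joint_cnf F k t l m) : {ffun 'I_l * 'I_m -> cnf_vec F k t} :=
  [ffun ri => cnf_share j (rho ri)].

(* t-privacy of the (uniformly random) sharing: for any set S of at most t
   servers, the distribution of their joint view is independent of the input.
   Since for each input the randomness is uniform over the finite set of valid
   sharings, and all these sets have the same size, this says that every view
   has the same number of preimages among valid sharings for every input. *)
Definition cnf_t_private (F : finFieldType) (k t l m : nat) : Prop :=
  forall (S : {set 'I_k}), (#|S| <= t)%N ->
  forall (x x' : 'I_l -> 'I_m -> F)
         (V : {ffun 'I_k -> {ffun 'I_l * 'I_m -> cnf_vec F k t}}),
    #|[set rho : joint_cnf F k t l m | joint_valid x rho &
        [forall j in S, joint_share j rho == V j]]|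
    = #|[set rho : joint_cnf F k t l m | joint_valid x' rho &
        [forall j in S, joint_share j rho == V j]]|.

(* A t-private k-server linear HSS for POLY_{d,m}(F)^l whose Share is CNF
   sharing, with output share of server j in F^(bj j):
   - Eval P j : server j's output share, computed from its input shares only
     (its argument is exactly server j's view);
   - Rec : F-linear map (F^(b_1) x ... x F^(b_k)) -> F^l;
   - correctness with probability 1, i.e. for every valid random sharing
     (each valid sharing has positive probability);
   - t-privacy of the sharing. *)
Definition Rec_linear (F : fieldType) (k l : nat) (bj : 'I_k -> nat)
    (Rec : (forall j : 'I_k, 'rV[F]_(bj j)) -> 'I_l -> F) : Prop :=
  forall (c : F) (y y' : forall j : 'I_k, 'rV[F]_(bj j)) (r : 'I_l),
    Rec (fun j => c *: y j + y' j) r = c * Rec y r + Rec y' r.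

Definition is_CNF_linear_HSS (F : finFieldType) (l t k d m : nat)
    (bj : 'I_k -> nat)
    (Eval : forall (P : 'I_l -> {mpoly F[m]}) (j : 'I_k),
              {ffun 'I_l * 'I_m -> cnf_vec F k t} -> 'rV[F]_(bj j))
    (Rec : (forall j : 'I_k, 'rV[F]_(bj j)) -> 'I_l -> F) : Prop :=
  [/\ Rec_linear Rec,
      (forall (P : 'I_l -> {mpoly F[m]}), (forall r, inPOLY d (P r)) ->
       forall (x : 'I_l -> 'I_m -> F) (rho : joint_cnf F k t l m),
         joint_valid x rho ->
         forall r : 'I_l,
           Rec (fun j => Eval P j (joint_share j rho)) r = (P r).@[x r])
    & cnf_t_private F k t l m].

Definition download_cost (F : finFieldType) (k : nat) (bj : 'I_k -> nat) : Rdefinitions.R :=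
  \sum_(j < k) log2 (#|F| ^ bj j).

Definition download_rate (F : finFieldType) (k l : nat) (bj : 'I_k -> nat) : Rdefinitions.R :=
  log2 (#|F| ^ l) / download_cost F bj.

Definition cnf_upload_cost (F : finFieldType) (k t l m : nat) : Rdefinitions.R :=
  \sum_(ri : 'I_l * 'I_m) \sum_(j < k) log2 (#|F| ^ cnf_share_len t j).

(* Main.v *)
Require Import Defs.
From HB Require Import structures.
From mathcomp Require Import all_boot all_order all_algebra.
From mathcomp Require Import mpoly.
From Stdlib Require Rdefinitions Rpower.
From mathcomp Require Import Rstruct.
From mathcomp Require Import ring lra.
From mathcomp Require Import zify.
Import Order.TTheory GRing.Theory Num.Theory.
Local Open Scope ring_scope.


Lemma log2X (N e : nat) : (0 < N)%N -> log2 (N ^ e) = e%:R * log2 N.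
Proof.
move=> N0; rewrite /log2 natrX -RpowE Rpower.ln_pow -?INRE ?mulrA //.

by rewrite INRE; apply/RltP; rewrite ltr0n.
Qed.

Lemma ln_nat_gt0 (N : nat) : (1 < N)%N -> 0 < Rpower.ln N%:R.
Proof.
move=> N1; apply/RltP.
have H : Rdefinitions.Rlt 1 N%:R by apply/RltP; rewrite ltr1n.
have := Rpower.ln_increasing 1 N%:R (ltac:(apply/RltP; exact: ltr01)) H.
by rewrite Rpower.ln_1.
Qed.

Lemma log2_gt0 (N : nat) : (1 < N)%N -> 0 < log2 N.
Proof.
by move=> N1; rewrite /log2; apply: divr_gt0; apply: ln_nat_gt0.
Qed.

Lemma card_tsets_pred (k t : nat) (P : pred {set 'I_k}) :
  #|[pred T : tsets k t | P (val T)]| = #|[set A : {set 'I_k} | P A & #|A| == t]|.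
Proof.
rewrite -(card_imset [pred T : tsets k t | P (val T)] val_inj); apply: eq_card => A.
rewrite inE; apply/imsetP/andP => [[T PT ->]|[PA cA]]; first by split => //; exact: (valP T).
by exists (Sub A cA).
Qed.

Lemma cnf_share_lenE (k t : nat) (j : 'I_k) : cnf_share_len t j = 'C(k.-1, t).
Proof.
rewrite /cnf_share_len (card_tsets_pred k t (fun A => j \notin A)).
rewrite -[in RHS](card_ord k) -(cardsC1 j) -cards_draws; apply: eq_card => A.
rewrite !inE; congr andb; apply/idP/idP => [jA|].
  by apply/subsetP => i iA; rewrite !inE; apply: contraNneq jA => <-.
by move/subsetP/(_ j); rewrite !inE eqxx; case: (j \in A) => //; apply.
Qed.

Lemma upload_costE (F : finFieldType) (k t l m : nat) :
  cnf_upload_cost F k t l m = (k * l * m * 'C(k.-1, t))%:R * log2 #|F|.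
Proof.
rewrite /cnf_upload_cost.
transitivity (\sum_(ri : 'I_l * 'I_m) \sum_(j < k) log2 (#|F| ^ 'C(k.-1, t))).
  by apply: eq_bigr => ri _; apply: eq_bigr => j _; rewrite cnf_share_lenE.
have F0 : (0 < #|F|)%N by apply/card_gt0P; exists 0.
rewrite !sumr_const card_prod !card_ord (log2X _ _ F0).
rewrite -mulrnA -mulrnAl -mulrnA; congr (_%:R * _).
by rewrite mulnC !mulnA.
Qed.

Lemma rateE (F : finFieldType) (k l b : nat) : (0 < k)%N -> (0 < b)%N ->
  download_rate F l (fun _ : 'I_k => b) = (l%:R / (k * b)%:R : Rdefinitions.R).
Proof.
move=> k0 b0; have F0 : (0 < #|F|)%N by apply/card_gt0P; exists 0.
rewrite /download_rate /download_cost sumr_const card_ord !(log2X _ _ F0).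
have F1 : (1 < #|F|)%N by apply/card_gt1P; exists 0, 1; rewrite !inE eq_sym oner_neq0.
have L0 : log2 #|F| != 0 by rewrite gt_eqF // log2_gt0.
have k0' : (k%:R : Rdefinitions.R) != 0 by rewrite pnatr_eq0 -lt0n.
have b0' : (b%:R : Rdefinitions.R) != 0 by rewrite pnatr_eq0 -lt0n.
rewrite -[_ *+ k]mulr_natl natrM.
field.
by rewrite L0 k0' b0'.
Qed.


Lemma exists_tset (k t : nat) (S : {set 'I_k}) : (#|S| <= t)%N -> (t <= k)%N ->
  exists T0 : tsets k t, S \subset val T0.
Proof.
move=> St tk.
have : (0 < #|[set A : {set 'I_k} | A \subset ~: S & #|A| == t - #|S|]|)%N.
  have cC : #|~: S| = (k - #|S|)%N by have H := cardsC S; rewrite card_ord in H; rewrite -[X in (X - _)%N]H addKn.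
  by rewrite cards_draws cC bin_gt0 leq_sub2r.
case/card_gt0P => A; rewrite inE => /andP [AS cA].
have cSA : #|S :|: A| == t.
  have SA0 : S :&: A = set0.
    apply/setP => i; rewrite !inE; apply/negbTE; apply/negP => /andP [iS iA].
    by have := subsetP AS i iA; rewrite inE iS.
  by rewrite cardsU SA0 cards0 subn0 (eqP cA) subnKC.
by exists (Sub (S :|: A) cSA); rewrite subsetUl.
Qed.

Lemma cnf_private (F : finFieldType) (k t l m : nat) : (t <= k)%N -> cnf_t_private F k t l m.
Proof.
move=> tk S St.
have [T0 ST0] := exists_tset k t S St tk.
suff H : forall (x x' : 'I_l -> 'I_m -> F)
         (V : {ffun 'I_k -> {ffun 'I_l * 'I_m -> cnf_vec F k t}}),
    (#|[set rho : joint_cnf F k t l m | joint_valid x rho &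
        [forall j in S, joint_share j rho == V j]]|
    <= #|[set rho : joint_cnf F k t l m | joint_valid x' rho &
        [forall j in S, joint_share j rho == V j]]|)%N.
  by move=> x x' V; apply/eqP; rewrite eqn_leq !H.
move=> x x' V.
pose phi (rho : joint_cnf F k t l m) : joint_cnf F k t l m :=
  [ffun ri => [ffun T => rho ri T + (if T == T0 then x' ri.1 ri.2 - x ri.1 ri.2 else 0)]].
have phi_inj : injective phi.
  move=> r1 r2 /ffunP H; apply/ffunP => ri; have /ffunP H' := H ri.
  apply/ffunP => T; have := H' T; rewrite !ffunE => /addIr //.
rewrite -(card_imset _ phi_inj); apply: subset_leq_card.
apply/subsetP => _ /imsetP [rho Hrho ->]; rewrite !inE in Hrho *.
case/andP: Hrho => Hv HV; apply/andP; split.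
  apply/forallP => ri; rewrite /cnf_valid ffunE.
  under eq_bigr do rewrite ffunE.
  rewrite big_split /= -big_mkcond /= big_pred1_eq.
  by rewrite (eqP (forallP Hv ri)) addrC subrK.
apply/forall_inP => j jS; rewrite -(eqP (forall_inP HV j jS)).
apply/eqP/ffunP => ri; rewrite !ffunE; apply/ffunP => T; rewrite /cnf_share !ffunE.
case: ifP => // jT; case: eqP => [eT|_]; last by rewrite addr0.
by move: jT; rewrite eT (subsetP ST0 j jS).
Qed.


Definition maskU (F : fieldType) (k b : nat) (U : {set 'I_k}) (M : 'M[F]_(k,b)) : 'M[F]_(k,b) :=
  \matrix_(i, j) if i \in U then 0 else M i j.

Definition gcol (F : fieldType) (k b l : nat) (g : 'I_l -> 'M[F]_(k,b)) : 'M[F]_(k * b, l) :=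
  \matrix_(n, r) mxvec (g r) 0 n.

Arguments maskU {F k b}.
Arguments gcol {F k b l}.

Lemma W_exists (F : fieldType) (k b l D : nat) (C : {vspace 'M[F]_(k,b)})
  (g : 'I_l -> 'M[F]_(k,b)) :
  (forall r, g r \in C) ->
  (forall a : 'I_l -> F, \sum_r a r *: g r = 0 -> forall r, a r = 0) ->
  code_dist_ge C D.+1 ->
  forall U : {set 'I_k}, (#|U| <= D)%N -> forall r : 'I_l,
  exists W, maskU U W = W /\ mxvec W *m gcol g = delta_mx 0 r.
Proof.
move=> gC gfree dist U UD r.
pose A : 'M[F]_(l, k * b) := \matrix_(r', n) mxvec (maskU U (g r')) 0 n.
have Afree : row_free A.
  apply: inj_row_free => v vA0.
  pose c := \sum_r' v 0 r' *: g r'.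
  have cC : c \in C by apply: memv_suml => r' _; apply: memvZ.
  have mc0 : maskU U c = 0.
    apply/matrixP => i j; rewrite !mxE; case: ifP => // iU.
    have E : (v *m A) 0 (mxvec_index i j) = 0 by rewrite vA0 mxE.
    rewrite -E !mxE summxE.
    by apply: eq_bigr => r' _; rewrite !mxE mxvecE mxE iU.
  have c0 : c = 0.
    apply/eqP; apply/negPn/negP => cn0.
    have := dist c 0 cC (mem0v C) cn0.
    have sub : [set i : 'I_k | row i c != row i 0] \subset U.
      apply/subsetP => i0; rewrite inE; apply: contraNT => iU.
      apply/eqP/rowP => j; have := congr1 (fun M : 'M[F]_(k, b) => M i0 j) mc0.
      by rewrite !mxE (negbTE iU) => ->.
    move=> H; have := leq_trans H (leq_trans (subset_leq_card sub) UD).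
    by rewrite ltnn.
  apply/rowP => r'; rewrite mxE; exact: (gfree (fun r' => v 0 r') c0).
case/row_freeP: Afree => B AB.
pose W := vec_mx (col r B)^T.
exists (maskU U W); split.
  by apply/matrixP => i j; rewrite !mxE; case: (i \in U).
apply/rowP => r'; transitivity ((A *m B) r' r).
  rewrite !mxE; apply: eq_bigr => n _; case/mxvec_indexP: n => i j.
  rewrite !mxE !mxvecE !mxE; case: ifP => _; by rewrite ?mul0r ?mulr0 // mulrC.
by rewrite AB !mxE eqxx /= eq_sym.
Qed.


Lemma msize_sum_le (F : fieldType) (n c : nat) (I : Type) (r : seq I) (P : pred I)
  (f : I -> {mpoly F[n]}) :
  (forall i, P i -> msize (f i) <= c)%N -> (msize (\sum_(i <- r | P i) f i) <= c)%N.
Proof.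
move=> H; elim/big_ind: _ => //; first by rewrite msize0.
by move=> x y Hx Hy; apply: leq_trans (msizeD_le _ _) _; rewrite geq_max Hx Hy.
Qed.

Lemma msizeM_le' (F : fieldType) (n : nat) (p q : {mpoly F[n]}) :
  (msize (p * q) <= (msize p + msize q).-1)%N.
Proof.
have [->|p0] := eqVneq p 0; first by rewrite mul0r msize0.
have [->|q0] := eqVneq q 0; first by rewrite mulr0 msize0.
by rewrite msizeM.
Qed.

Lemma msizeX_le (F : fieldType) (n e : nat) (p : {mpoly F[n]}) :
  (msize p <= 2)%N -> (msize (p ^+ e) <= e.+1)%N.
Proof.
move=> p2; elim: e => [|e IH]; first by rewrite expr0 msize1.
rewrite exprS; apply: leq_trans (msizeM_le' _ _ _ _) _.
by move: IH p2; rewrite -subn1; lia.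
Qed.

Lemma msize_prod_le (F : fieldType) (n m : nat) (lqq : m.-tuple {mpoly F[n]})
  (mono : 'X_{1..m}) :
  (forall i, msize (tnth lqq i) <= 2)%N ->
  (msize (\prod_(i < m) tnth lqq i ^+ mono i) <= (mdeg mono).+1)%N.
Proof.
move=> H; rewrite mdegE.
elim/big_rec2: _ => [|i e q _ IH]; first by rewrite msize1.
apply: leq_trans (msizeM_le' _ _ _ _) _.
have := msizeX_le _ _ (mono i) _ (H i) => Hi.
by move: IH Hi; rewrite -subn1; lia.
Qed.

Lemma msize_comp_le (F : fieldType) (n m : nat) (lqq : m.-tuple {mpoly F[n]})
  (p : {mpoly F[m]}) :
  (forall i, msize (tnth lqq i) <= 2)%N -> (msize (p \mPo lqq) <= msize p)%N.
Proof.
move=> H; rewrite comp_mpolyE big_seq; apply: msize_sum_le => mono Hm.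
apply: leq_trans (msizeZ_le _ _) _.
apply: leq_trans (msize_prod_le _ _ _ _ mono H) _.
exact: msize_mdeg_lt.
Qed.


Lemma card_bigcup_le (I T : finType) (P : pred I) (A : I -> {set T}) :
  (#|\bigcup_(i | P i) A i| <= \sum_(i | P i) #|A i|)%N.
Proof.
elim/big_rec2: _ => [|i s S _ IH]; first by rewrite cards0.
by rewrite cardsU; apply: leq_trans (leq_subr _ _) _; rewrite leq_add2l.
Qed.

Lemma card_Umono (k t n : nat) (f : 'I_n -> tsets k t) (mono : 'X_{1..n}) :
  (#|\bigcup_(i | mono i != 0%N) val (f i)| <= t * mdeg mono)%N.
Proof.
apply: leq_trans (card_bigcup_le _ _ _ _) _.
rewrite mdegE big_distrr /= big_mkcond /=; apply: leq_sum => i _.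
case: eqP => [->|mi] /=; first by [].
by rewrite (eqP (valP (f i))); case: (mono i) mi => // e _; rewrite leq_pmulr.
Qed.

Lemma entry_sum (F : fieldType) (p q : nat) (I : Type) (r : seq I) (Pr : pred I)
  (f : I -> 'rV[F]_p) (G : 'M[F]_(p, q)) j :
  ((\sum_(i <- r | Pr i) f i) *m G) 0 j = \sum_(i <- r | Pr i) (f i *m G) 0 j.
Proof. by rewrite mulmx_suml summxE. Qed.

Lemma entry_scale (F : fieldType) (p q : nat) (a : F) (M : 'rV[F]_p) (G : 'M[F]_(p, q)) j :
  ((a *: M) *m G) 0 j = a * (M *m G) 0 j.
Proof. by rewrite -scalemxAl mxE. Qed.

Theorem mainTheorem5 (l t k d m : nat) (F : finFieldType) :
  (0 < l)%N -> (0 < t)%N -> (0 < k)%N -> (0 < d)%N -> (0 < m)%N ->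
  forall b : nat, (l%:R / k%:R < b%:R :> rat) ->
  (exists C : {vspace 'M[F]_(k, b)},
      l%:R / (k * b)%:R <= code_rate C /\ code_dist_ge C (d * t + 1)) ->
  exists (bj : 'I_k -> nat)
         (Eval : forall (P : 'I_l -> {mpoly F[m]}) (j : 'I_k),
                   {ffun 'I_l * 'I_m -> cnf_vec F k t} -> 'rV[F]_(bj j))
         (Rec : (forall j : 'I_k, 'rV[F]_(bj j)) -> 'I_l -> F),
    [/\ is_CNF_linear_HSS d Eval Rec,
        download_rate F l bj = l%:R / (k * b)%:R
      & cnf_upload_cost F k t l m = (k * l * m * 'C(k.-1, t))%:R * log2 #|F|].
Proof.
move=> l0 t0 k0 d0 m0 b lkb [C [rateC distC]].
have b0 : (0 < b)%N.
  rewrite lt0n; apply/negP => /eqP b0; move: lkb; rewrite b0.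
  by rewrite ltNge divr_ge0 ?ler0n.
have dimC : (l <= \dim C)%N.
  move: rateC; rewrite /code_rate [(b * k)%N]mulnC.
  by rewrite ler_pM2r ?invr_gt0 ?ltr0n ?muln_gt0 ?k0 ?b0 // ler_nat.
pose s := take l (vbasis C).
have ss : size s == l by rewrite size_takel // size_tuple.
pose g (r : 'I_l) := s`_r.
have gC : forall r, g r \in C.
  move=> r; apply: vbasis_mem; apply: (@mem_take l).
  by rewrite mem_nth // (eqP ss).
have gfree : forall a : 'I_l -> F, \sum_r a r *: g r = 0 -> forall r, a r = 0.
  have : free s.
    have := basis_free (vbasisP C); rewrite -(cat_take_drop l (vbasis C)).
    exact: catl_free.
  by move=> fs; have /freeP := (fs : free (Tuple ss)).
have tk : (t <= k)%N.
  pose r0 : 'I_l := Ordinal l0.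
  have g0 : g r0 != 0.
    apply/negP => /eqP g0.
    have : ((r0 == r0)%:R : F) = 0.
      apply: (gfree (fun r => (r == r0)%:R)); apply: big1 => r _.
      by case: eqP => [->|_]; rewrite ?g0 ?scaler0 ?scale0r.
    by rewrite eqxx => /eqP; rewrite oner_eq0.
  have := distC (g r0) 0 (gC r0) (mem0v C) g0.
  move=> /leq_trans /(_ (max_card _)); rewrite card_ord => H.
  apply: leq_trans H; rewrite addn1; apply: leq_trans (leqnSn _); exact: leq_pmull.
pose N := #|{: 'I_m * tsets k t}|.
pose lqq : m.-tuple {mpoly F[N]} :=
  [tuple \sum_(T : tsets k t) 'X_(enum_rank (i, T)) | i < m].
pose Q (P : 'I_l -> {mpoly F[m]}) (r : 'I_l) := (P r) \mPo lqq.
pose Um (mono : 'X_{1..N}) : {set 'I_k} :=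
  \bigcup_(n | mono n != 0%N) val (enum_val n).2.
pose gg : 'M[F]_(k * b, l) := gcol g.
pose pW (U : {set 'I_k}) (r : 'I_l) : 'M[F]_(k, b) :=
  odflt 0 [pick W : 'M[F]_(k, b) | (maskU U W == W) && (mxvec W *m gg == delta_mx 0 r)].
pose vv (view : {ffun 'I_l * 'I_m -> cnf_vec F k t}) (r : 'I_l) (n : 'I_N) : F :=
  view (r, (enum_val n).1) (enum_val n).2.
pose Y (P : 'I_l -> {mpoly F[m]}) (view : {ffun 'I_l * 'I_m -> cnf_vec F k t}) : 'M[F]_(k, b) :=
  \sum_(r < l) \sum_(mono <- msupp (Q P r))
     ((Q P r)@_mono * \prod_n vv view r n ^+ mono n) *: pW (Um mono) r.
exists (fun _ => b), (fun P j view => row j (Y P view)),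
  (fun y r => (mxvec (\matrix_(j, c) (y j : 'rV[F]_b) 0 c) *m gg) 0 r).
have pW_mask : forall U r, maskU U (pW U r) = pW U r.
  move=> U r; rewrite /pW; case: pickP => [W /andP [/eqP -> _] //|_] /=.
  by apply/matrixP => i j; rewrite !mxE; case: (i \in U).
have pW_spec : forall (U : {set 'I_k}) (r : 'I_l), (#|U| <= d * t)%N -> mxvec (pW U r) *m gg = delta_mx 0 r.
  move=> U r HU; rewrite /pW; case: pickP => [W /andP [_ /eqP] //| H].
  rewrite addn1 in distC.
  have [W [W1 W2]] := W_exists F k b l (d * t) C g gC gfree distC U HU r.
  by have := H W; rewrite W1 W2 !eqxx.
split; last first.
- exact: upload_costE.
- exact: rateE.
split.
- move=> c y y' r /=.
  rewrite [X in mxvec X *m gg](_ : _ = c *: (\matrix_(j, c0) (y j : 'rV[F]_b) 0 c0) + \matrix_(j, c0) (y' j : 'rV[F]_b) 0 c0); last first.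

    by apply/matrixP => j c0; rewrite !mxE.
  by rewrite linearD linearZ /= mulmxDl -scalemxAl !mxE.
- move=> P Pd x rho Hv r0 /=.
  have Hlq : forall i, (msize (tnth lqq i) <= 2)%N.
    move=> i; rewrite tnth_mktuple; apply: msize_sum_le => T _.
    by rewrite msizeX mdeg1.
  have Hdeg : forall r mono, mono \in msupp (Q P r) -> (#|Um mono| <= d * t)%N.
    move=> r mono Hm.
    apply: leq_trans (card_Umono k t N (fun n => (enum_val n).2) mono) _.
    rewrite mulnC; apply: leq_mul => //.
    have H1 : (mdeg mono < msize (P r \mPo lqq))%N := msize_mdeg_lt Hm.
    have H2 := msize_comp_le _ _ _ lqq (P r) Hlq.
    have H3 := Pd r; rewrite /inPOLY in H3.
    by rewrite -ltnS; apply: leq_trans H1 (leq_trans H2 H3).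
  rewrite [X in mxvec X *m gg](_ : _ = Y P rho); last first.
    apply/matrixP => j c; rewrite !mxE /Y !summxE; apply: eq_bigr => r _.
    rewrite !summxE; apply: eq_bigr => mono _; rewrite !mxE.
    case: (boolP (j \in Um mono)) => jU.
      by rewrite -pW_mask mxE jU !mulr0.
    congr (_ * _ * _); apply: eq_bigr => n _.
    case: (eqVneq (mono n) 0%N) => [->|mn]; first by rewrite !expr0.
    have jT : j \notin val (enum_val n).2.
      by apply: contra jU => jT; apply/bigcupP; exists n.
    by rewrite /vv /joint_share ffunE /cnf_share ffunE jT.
  rewrite /Y linear_sum entry_sum.
  rewrite (bigD1 r0) //= [X in _ + X]big1 ?addr0; last first.
    move=> r nr; rewrite linear_sum entry_sum big_seq; apply: big1 => mono Hm.
    rewrite linearZ /= entry_scale pW_spec ?(Hdeg r) // mxE eqxx /=.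
    by rewrite eq_sym (negbTE nr) mulr0.
  rewrite linear_sum entry_sum.
  transitivity (\sum_(mono <- msupp (Q P r0)) (Q P r0)@_mono * \prod_n vv rho r0 n ^+ mono n).
    rewrite !big_seq; apply: eq_bigr => mono Hm.
    by rewrite linearZ /= entry_scale pW_spec ?(Hdeg r0) // mxE !eqxx mulr1.
  rewrite -mevalE comp_mpoly_meval; apply: meval_eq => i.
  rewrite tnth_mktuple raddf_sum /=.
  under eq_bigr do rewrite mevalXU.
  rewrite /vv; under eq_bigr do rewrite enum_rankK /=.
  exact: (eqP (forallP Hv (r0, i))).
- exact: cnf_private.
Qed.
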